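(* Let $f:(L',\alpha_{L'})\to(L,\alpha_L)$ be an $\alpha$-cover and let $C=\mathfrak{uce}_\alpha(f)(\mathrm{Ker}\,U_{\alpha'})\subseteq\mathfrak{uce}_\alpha(L)$. For any $h\in\mathrm{Aut}(L,\alpha_L)$ there exists $\theta_h\in\mathrm{Aut}(L',\alpha_{L'})$ with $f\circ\theta_h=h\circ f$ if and only if the automorphism $\mathfrak{uce}_\alpha(h)$ of $\mathfrak{uce}_\alpha(L)$ satisfies $\mathfrak{uce}_\alpha(h)(C)=C$. In that case $\theta_h$ is uniquely determined by $f\circ\theta_h=h\circ f$ and $\theta_h(\mathrm{Ker}\,f)=\mathrm{Ker}\,f$. Moreover the map $\Theta:\{h\in\mathrm{Aut}(L,\alpha_L):\mathfrak{uce}_\alpha(h)(C)=C\}\to\{g\in\mathrm{Aut}(L',\alpha_{L'}):g(\mathrm{Ker}\,f)=\mathrm{Ker}\,f\}$, $h\mapsto\theta_h$, is a group isomorphism.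
   Context: Hom-Leibniz algebras are multiplicative: $(L,\alpha_L)$ is a $\mathbb{K}$-vector space with bilinear bracket and linear $\alpha_L$ such that $[\alpha_L(x),[y,z]]=[[x,y],\alpha_L(z)]-[[x,z],\alpha_L(y)]$ and $\alpha_L[x,y]=[\alpha_L(x),\alpha_L(y)]$; homomorphisms preserve brackets and commute with structure maps; $\mathrm{Aut}(L,\alpha_L)$ is the group of bijective homomorphisms $L\to L$. $Z(K)=\{x:[x,y]=0=[y,x]\ \forall y\}$. $(L,\alpha_L)$ is $\alpha$-perfect if $L=[\alpha_L(L),\alpha_L(L)]$. A central extension is a surjective homomorphism $\pi$ with $\mathrm{Ker}\,\pi\subseteq Z(K)$. An $\alpha$-cover is a central extension $f:(L',\alpha_{L'})\to(L,\alpha_L)$ with $(L',\alpha_{L'})$ $\alpha$-perfect (then $L$ is $\alpha$-perfect too). For $\alpha$-perfect $(L,\alpha_L)$: $I_L\subseteq\alpha_L(L)\otimes\alpha_L(L)$ is spanned by $-[x_1,x_2]\otimes\alpha_L(x_3)+[x_1,x_3]\otimes\alpha_L(x_2)+\alpha_L(x_1)\otimes[x_2,x_3]$; $\mathfrak{uce}_\alpha(L)=(\alpha_L(L)\otimes\alpha_L(L))/I_L$ with classes $\{\alpha_L(x_1),\alpha_L(x_2)\}$, bracket $[\{a,b\},\{c,e\}]=\{[a,b],[c,e]\}$, endomorphism $\overline{\alpha}\{\alpha_L(x_1),\alpha_L(x_2)\}=\{\alpha_L^2(x_1),\alpha_L^2(x_2)\}$, and $U_\alpha:\mathfrak{uce}_\alpha(L)\to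 L$, $U_\alpha\{a,b\}=[a,b]$ (the universal $\alpha$-central extension of $L$); $U_{\alpha'}$ is the same for $L'$. For a homomorphism $g$ of $\alpha$-perfect algebras, $\mathfrak{uce}_\alpha(g)\{\alpha(x_1),\alpha(x_2)\}=\{\alpha(g(x_1)),\alpha(g(x_2))\}$. *)

(* Defs.v *)
From HB Require Import structures.
From mathcomp Require Import all_boot all_order all_algebra.
From Stdlib Require List.
Set Implicit Arguments. Unset Strict Implicit. Unset Printing Implicit Defensive.
Import GRing.Theory.
Local Open Scope ring_scope.

Section HomLeibnizDefs.
Variable K : fieldType.

Record HomLeibniz (V : lmodType K) (br : V -> V -> V) (al : V -> V) : Prop := {
  hl_brl : forall (k : K) x y z, br (k *: x + y) z = k *: br x z + br y z;
  hl_brr : forall (k : K) x y z, br z (k *: x + y) = k *: br z x + br z y;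
  hl_al_lin : forall (k : K) x y, al (k *: x + y) = k *: al x + al y;
  hl_leibniz : forall x y z,
      br (al x) (br y z) = br (br x y) (al z) - br (br x z) (al y);
  hl_mult : forall x y, al (br x y) = br (al x) (al y) }.

Definition is_hom (V W : lmodType K) (brV : V -> V -> V) (alV : V -> V)
    (brW : W -> W -> W) (alW : W -> W) (f : V -> W) : Prop :=
  [/\ forall (k : K) x y, f (k *: x + y) = k *: f x + f y,
      forall x y, f (brV x y) = brW (f x) (f y) &
      forall x, f (alV x) = alW (f x)].

Definition is_aut (V : lmodType K) (br : V -> V -> V) (al : V -> V) (g : V -> V) :=
  is_hom br al br al g /\ bijective g.

Definition in_center (V : lmodType K) (br : V -> V -> V) (x : V) : Prop :=
  forall y, br x y = 0 /\ br y x = 0.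

Definition alpha_perfect (V : lmodType K) (br : V -> V -> V) (al : V -> V) : Prop :=
  forall x : V, exists s : seq (K * V * V),
    x = \sum_(e <- s) e.1.1 *: br (al e.1.2) (al e.2).

Definition central_extension (V W : lmodType K) brV alV brW alW (f : V -> W) :=
  [/\ is_hom brV alV brW alW f,
      forall y : W, exists x : V, f x = y &
      forall x : V, f x = 0 -> in_center brV x].

Definition alpha_cover (V W : lmodType K) brV alV brW alW (f : V -> W) :=
  central_extension brV alV brW alW f /\ alpha_perfect brV alV.

(* ---- uce_alpha(L) = (al(L) (x) al(L)) / I_L ----
   An element of the free K-vector space on V x V is represented by a finite
   formal sum [:: (c, a, b); ...] meaning sum c.(a,b).  The tensor product
   V (x) V is the free space modulo the bilinearity relations; al(L)(x)al(L)
   is the subspace spanned by a (x) b with a, b in al(L) (over a field it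
   embeds in V (x) V).  uce_alpha(L) is obtained by further quotienting by I_L. *)
Definition tcoef (V : lmodType K) (s : seq (K * V * V)) (a b : V) : K :=
  \sum_(e <- s | (e.1.2 == a) && (e.2 == b)) e.1.1.

Definition tscale (V : lmodType K) (k : K) (s : seq (K * V * V)) : seq (K * V * V) :=
  [seq (k * e.1.1, e.1.2, e.2) | e <- s].

Definition tsub (V : lmodType K) (s t : seq (K * V * V)) : seq (K * V * V) :=
  s ++ tscale (-1) t.

Definition tmap (V W : lmodType K) (g : V -> W) (s : seq (K * V * V)) : seq (K * W * W) :=
  [seq (e.1.1, g e.1.2, g e.2) | e <- s].

(* generators of the subspace (bilinearity relations) + I_L *)
Definition rel_gen (V : lmodType K) (br : V -> V -> V) (al : V -> V)
    (r : seq (K * V * V)) : Prop :=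
  (exists a a' b, r = [:: (1, a + a', b); (-1, a, b); (-1, a', b)]) \/
  (exists a b b', r = [:: (1, a, b + b'); (-1, a, b); (-1, a, b')]) \/
  (exists (k : K) a b, r = [:: (1, k *: a, b); (- k, a, b)]) \/
  (exists (k : K) a b, r = [:: (1, a, k *: b); (- k, a, b)]) \/
  (exists x1 x2 x3, r = [:: (-1, br x1 x2, al x3); (1, br x1 x3, al x2);
                             (1, al x1, br x2 x3)]).

Definition in_rel (V : lmodType K) (br : V -> V -> V) (al : V -> V)
    (s : seq (K * V * V)) : Prop :=
  exists rs : seq (K * seq (K * V * V)),
    (forall p, Stdlib.Lists.List.In p rs -> rel_gen br al p.2) /\
    tcoef s =2 tcoef (flatten [seq tscale p.1 p.2 | p <- rs]).

Definition uce_eq (V : lmodType K) (br : V -> V -> V) (al : V -> V)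
    (s t : seq (K * V * V)) : Prop := in_rel br al (tsub s t).

(* formal sums representing elements of al(L) (x) al(L) *)
Definition in_uce (V : lmodType K) (al : V -> V) (s : seq (K * V * V)) : Prop :=
  forall e, Stdlib.Lists.List.In e s -> (exists x, e.1.2 = al x) /\ (exists y, e.2 = al y).

(* representatives of elements of Ker U_alpha, U_alpha{a,b} = [a,b] *)
Definition in_ker_U (V : lmodType K) (br : V -> V -> V) (al : V -> V)
    (s : seq (K * V * V)) : Prop :=
  in_uce al s /\ \sum_(e <- s) e.1.1 *: br e.1.2 e.2 = 0.

(* uce_alpha(h)(C) = C, where C = uce_alpha(f)(Ker U_alpha') ;
   on classes uce_alpha(g){a,b} = {g a, g b} since g commutes with al. *)
Definition uce_stable (V W : lmodType K) brV alV brW alW (f : V -> W) (h : W -> W) :=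
  (forall s, in_ker_U brV alV s ->
     exists t, in_ker_U brV alV t /\ uce_eq brW alW (tmap h (tmap f s)) (tmap f t)) /\
  (forall t, in_ker_U brV alV t ->
     exists s, in_ker_U brV alV s /\ uce_eq brW alW (tmap f t) (tmap h (tmap f s))).

Definition preserves_ker (V W : lmodType K) (f : V -> W) (g : V -> V) : Prop :=
  (forall x, f x = 0 -> f (g x) = 0) /\
  (forall y, f y = 0 -> exists x, f x = 0 /\ g x = y).

End HomLeibnizDefs.

(* Main.v *)
Require Import Defs.
From HB Require Import structures.
From mathcomp Require Import all_boot all_order all_algebra.
From Stdlib Require Import ClassicalEpsilon.
Set Implicit Arguments. Unset Strict Implicit. Unset Printing Implicit Defensive.
Import GRing.Theory.
Local Open Scope ring_scope.

Section Generic.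
Variable K : fieldType.

Definition lin (U M : lmodType K) (h : U -> M) :=
  forall (k : K) x y, h (k *: x + y) = k *: h x + h y.

Section Lin.
Variables (U M : lmodType K) (h : U -> M).
Hypothesis hl : lin h.

Lemma lin0 : h 0 = 0.
Proof.
have := hl 1 0 0; rewrite scaler0 addr0 scale1r => E.
by apply: (addrI (h 0)); rewrite addr0 -E.
Qed.

Lemma linD x y : h (x + y) = h x + h y.
Proof. by have := hl 1 x y; rewrite !scale1r. Qed.

Lemma linZ k x : h (k *: x) = k *: h x.
Proof. by have := hl k x 0; rewrite !addr0 lin0 addr0. Qed.

Lemma linN x : h (- x) = - h x.
Proof. by rewrite -scaleN1r linZ scaleN1r. Qed.

Lemma linB x y : h (x - y) = h x - h y.
Proof. by rewrite linD linN. Qed.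

Lemma lin_sum (I : Type) (s : seq I) (F : I -> U) :
  h (\sum_(e <- s) F e) = \sum_(e <- s) h (F e).
Proof.
elim: s => [|e s IH]; first by rewrite !big_nil lin0.
by rewrite !big_cons linD IH.
Qed.
End Lin.

Lemma lin_comp (U M N : lmodType K) (h : U -> M) (g : M -> N) :
  lin h -> lin g -> lin (g \o h).
Proof. by move=> H G k x y /=; rewrite H G. Qed.

Definition Phi (U M : lmodType K) (F : U -> U -> M) (s : seq (K * U * U)) : M :=
  \sum_(e <- s) e.1.1 *: F e.1.2 e.2.

Definition pairs (U : lmodType K) (s : seq (K * U * U)) := [seq (e.1.2, e.2) | e <- s].

Lemma Phi_regroup (U M : lmodType K) (F : U -> U -> M) (s : seq (K * U * U))
   (P : seq (U * U)) : uniq P -> {subset pairs s <= P} ->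
  Phi F s = \sum_(p <- P) tcoef s p.1 p.2 *: F p.1 p.2.
Proof.
move=> uP; elim: s => [|e s IH] sub.
  rewrite /Phi big_nil; apply/esym/big1 => p _.
  by rewrite /tcoef big_nil scale0r.
have sub' : {subset pairs s <= P}.
  by move=> q qs; apply: sub; rewrite /pairs /= inE qs orbT.
have eP : (e.1.2, e.2) \in P by apply: sub; rewrite /pairs /= inE eqxx.
rewrite /Phi big_cons -/(Phi F s) IH //.
rewrite (bigD1_seq (e.1.2, e.2)) //= [X in _ = X](bigD1_seq (e.1.2, e.2)) //=.
rewrite /tcoef big_cons /= !eqxx /= -/(tcoef s e.1.2 e.2) scalerDl addrA.
congr (_ + _); apply: eq_bigr => p pe.
rewrite big_cons.
case: ifP => // /andP [/eqP E1 /eqP E2].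
by move: pe E1 E2; case: p => a b /= pe E1 E2; subst a b; rewrite eqxx in pe.
Qed.

Lemma Phi_tcoef (U M : lmodType K) (F : U -> U -> M) (s t : seq (K * U * U)) :
  tcoef s =2 tcoef t -> Phi F s = Phi F t.
Proof.
move=> E.
have u : uniq (undup (pairs s ++ pairs t)) by apply: undup_uniq.
rewrite (Phi_regroup F u); last by move=> q qs; rewrite mem_undup mem_cat qs.
rewrite (Phi_regroup F u); last by move=> q qs; rewrite mem_undup mem_cat qs orbT.
by apply: eq_bigr => p _; rewrite E.
Qed.

End Generic.

Section Generic2.
Variable K : fieldType.
Variables (U M : lmodType K) (F : U -> U -> M).

Lemma Phi_cat (s t : seq (K * U * U)) : Phi F (s ++ t) = Phi F s + Phi F t.
Proof. by rewrite /Phi big_cat. Qed.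

Lemma Phi_tscale k (s : seq (K * U * U)) : Phi F (tscale k s) = k *: Phi F s.
Proof.
rewrite /Phi /tscale big_map scaler_sumr; apply: eq_bigr => e _ /=.
by rewrite scalerA.
Qed.

Lemma Phi_tsub (s t : seq (K * U * U)) : Phi F (tsub s t) = Phi F s - Phi F t.
Proof. by rewrite /tsub Phi_cat Phi_tscale scaleN1r. Qed.

Lemma Phi_nil : Phi F [::] = 0.
Proof. by rewrite /Phi big_nil. Qed.

Lemma Phi_cons e s : Phi F (e :: s) = e.1.1 *: F e.1.2 e.2 + Phi F s.
Proof. by rewrite /Phi big_cons. Qed.

Lemma Phi_uce (br : U -> U -> U) (al : U -> U) (s t : seq (K * U * U)) :
  (forall r, rel_gen br al r -> Phi F r = 0) ->
  uce_eq br al s t -> Phi F s = Phi F t.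
Proof.
move=> Hg [rs [Hrs Ht]].
have /eqP : Phi F (tsub s t) = 0.
  rewrite (Phi_tcoef F Ht).
  elim: rs Hrs {Ht} => [|p rs IH] Hrs /=; first by rewrite Phi_nil.
  rewrite Phi_cat Phi_tscale Hg ?scaler0 ?add0r; last by apply: (Hrs p); left.
  by apply: IH => q Hq; apply: Hrs; right.
by rewrite Phi_tsub subr_eq0 => /eqP.
Qed.

Lemma Phi_gen (br : U -> U -> U) (al : U -> U) :
  (forall w, lin (F ^~ w)) -> (forall w, lin (F w)) ->
  (forall x1 x2 x3, - F (br x1 x2) (al x3) + F (br x1 x3) (al x2) + F (al x1) (br x2 x3) = 0) ->
  forall r, rel_gen br al r -> Phi F r = 0.
Proof.
move=> H1 H2 H3 r [[a [a' [b ->]]]|[[a [b [b' ->]]]|[[k [a [b ->]]]|[[k [a [b ->]]]|[x1 [x2 [x3 ->]]]]]]];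
  rewrite !Phi_cons Phi_nil /= addr0.
- have := linD (H1 b) a a' => /= ->.
  by rewrite scale1r !scaleN1r -opprD subrr.
- have := linD (H2 a) b b' => /= ->.
  by rewrite scale1r !scaleN1r -opprD subrr.
- have := linZ (H1 b) k a => /= ->.
  by rewrite scale1r scaleNr subrr.
- have := linZ (H2 a) k b => /= ->.
  by rewrite scale1r scaleNr subrr.
- by rewrite !scale1r scaleN1r addrA.
Qed.

End Generic2.

Section HomGen.
Variables (K : fieldType) (U : lmodType K) (br : U -> U -> U) (al : U -> U).

Lemma hom_id : is_hom br al br al id.
Proof. by split. Qed.

Lemma hom_comp g1 g2 : is_hom br al br al g1 -> is_hom br al br al g2 ->
  is_hom br al br al (g1 \o g2).
Proof. by move=> [l1 b1 a1] [l2 b2 a2]; split => * /=; rewrite ?l2 ?l1 ?b2 ?b1 ?a2 ?a1. Qed.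

Lemma aut_comp g1 g2 : is_aut br al g1 -> is_aut br al g2 -> is_aut br al (g1 \o g2).
Proof. by move=> [h1 b1] [h2 b2]; split; [apply: hom_comp | apply: bij_comp]. Qed.

Lemma aut_inv h : is_aut br al h ->
  exists hinv, [/\ is_hom br al br al hinv, cancel h hinv & cancel hinv h].
Proof.
move=> [[l b a] [hinv c1 c2]]; exists hinv; split => //; split.
- by move=> k x y; rewrite -{1}(c2 x) -{1}(c2 y) -l c1.
- by move=> x y; rewrite -{1}(c2 x) -{1}(c2 y) -b c1.
- by move=> x; rewrite -{1}(c2 x) -a c1.
Qed.

Lemma aut_inv_aut h hinv : is_hom br al br al hinv -> cancel h hinv -> cancel hinv h ->
  is_aut br al hinv.
Proof. by move=> H c1 c2; split => //; exists h. Qed.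

Lemma tcoef_cat (s t : seq (K * U * U)) a b : tcoef (s ++ t) a b = tcoef s a b + tcoef t a b.
Proof. by rewrite /tcoef big_cat. Qed.

Lemma tcoef_tscale k (s : seq (K * U * U)) a b : tcoef (tscale k s) a b = k * tcoef s a b.
Proof. by rewrite /tcoef /tscale big_map mulr_sumr. Qed.

Lemma uce_eq_refl (s : seq (K * U * U)) : uce_eq br al s s.
Proof.
exists [::]; split => // a b.
by rewrite /tsub tcoef_cat tcoef_tscale mulN1r subrr /tcoef big_nil.
Qed.

End HomGen.

Lemma Phi_tmap (K : fieldType) (U U' M : lmodType K) (F : U' -> U' -> M) (g : U -> U') s :
  Phi F (tmap g s) = Phi (fun a b => F (g a) (g b)) s.
Proof. by rewrite /Phi /tmap big_map. Qed.

Lemma Phi_ext (K : fieldType) (U M : lmodType K) (F G : U -> U -> M) s :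
  (forall a b, F a b = G a b) -> Phi F s = Phi G s.
Proof. by move=> E; apply: eq_bigr => e _; rewrite E. Qed.

Lemma lin_Phi (K : fieldType) (U M N : lmodType K) (h : M -> N) (F : U -> U -> M) s :
  lin h -> h (Phi F s) = Phi (fun a b => h (F a b)) s.
Proof.
move=> hl; rewrite /Phi (lin_sum hl); apply: eq_bigr => e _.
by rewrite (linZ hl).
Qed.

Lemma in_uce_nil (K : fieldType) (U : lmodType K) (al : U -> U) : in_uce al [::].
Proof. by []. Qed.

Lemma in_uce_cons (K : fieldType) (U : lmodType K) (al : U -> U) e s :
  in_uce al (e :: s) <-> (((exists x, e.1.2 = al x) /\ (exists y, e.2 = al y)) /\ in_uce al s).
Proof.
split.
  by move=> H; split; [apply: H; left | move=> e' He'; apply: H; right].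
by move=> [H1 H2] e' /= [<-|He'] //; apply: H2.
Qed.

Lemma in_uce_cat (K : fieldType) (U : lmodType K) (al : U -> U) s t :
  in_uce al s -> in_uce al t -> in_uce al (s ++ t).
Proof.
elim: s => [|e s IH] //= /in_uce_cons [He Hs] Ht.
by apply/in_uce_cons; split => //; apply: IH.
Qed.

Lemma in_uce_tscale (K : fieldType) (U : lmodType K) (al : U -> U) k s :
  in_uce al s -> in_uce al (tscale k s).
Proof.
elim: s => [|e s IH] //= /in_uce_cons [He Hs].
by apply/in_uce_cons; split => //; apply: IH.
Qed.

Lemma in_uce_tmap (K : fieldType) (U : lmodType K) (al g : U -> U) s :
  (forall x, exists y, g (al x) = al y) -> in_uce al s -> in_uce al (tmap g s).
Proof.
move=> Hg; elim: s => [|e s IH] //= /in_uce_cons [[[x Hx] [y Hy]] Hs].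
apply/in_uce_cons; split; last by apply: IH.
by rewrite /= Hx Hy; split; apply: Hg.
Qed.

Lemma in_uce_tmap_al (K : fieldType) (U : lmodType K) (al : U -> U) s :
  in_uce al (tmap al s).
Proof.
elim: s => [|e s IH] //=; apply/in_uce_cons; split => //.
by split; [exists e.1.2 | exists e.2].
Qed.

Section Main.
Variables (K : fieldType) (V W : lmodType K) (brV : V -> V -> V) (alV : V -> V)
  (brW : W -> W -> W) (alW : W -> W) (f : V -> W).
Hypotheses (HV : HomLeibniz brV alV) (HW : HomLeibniz brW alW)
  (Hc : alpha_cover brV alV brW alW f).

Lemma fhom : is_hom brV alV brW alW f. Proof. by case: Hc => [[]]. Qed.
Lemma flin : lin f. Proof. by case: fhom. Qed.
Lemma fbr x y : f (brV x y) = brW (f x) (f y). Proof. by case: fhom. Qed.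
Lemma fal x : f (alV x) = alW (f x). Proof. by case: fhom. Qed.
Lemma fsurj w : exists x, f x = w. Proof. by case: Hc => [[_ H _] _]; apply: H. Qed.
Lemma fker x : f x = 0 -> in_center brV x. Proof. by case: Hc => [[_ _ H] _]; apply: H. Qed.
Lemma Vperf : alpha_perfect brV alV. Proof. by case: Hc. Qed.

Lemma brl z : lin (brV ^~ z). Proof. by move=> k x y; apply: (hl_brl HV). Qed.
Lemma brr z : lin (brV z). Proof. by move=> k x y; apply: (hl_brr HV). Qed.
Lemma brlW z : lin (brW ^~ z). Proof. by move=> k x y; apply: (hl_brl HW). Qed.
Lemma brrW z : lin (brW z). Proof. by move=> k x y; apply: (hl_brr HW). Qed.
Lemma allin : lin alV. Proof. by move=> k x y; apply: (hl_al_lin HV). Qed.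
Lemma allinW : lin alW. Proof. by move=> k x y; apply: (hl_al_lin HW). Qed.

Lemma br_ker u1 u1' u2 u2' : f u1 = f u1' -> f u2 = f u2' -> brV u1 u2 = brV u1' u2'.
Proof.
move=> E1 E2.
have z1 : f (u1 - u1') = 0 by rewrite (linB flin) E1 subrr.
have z2 : f (u2 - u2') = 0 by rewrite (linB flin) E2 subrr.
rewrite -(subrK u1' u1) -(subrK u2' u2).
have := linD (brl (u2 - u2' + u2')) (u1 - u1') u1' => /= ->.
have := linD (brr u1') (u2 - u2') u2' => /= ->.
by rewrite (proj1 (fker z1 _)) (proj2 (fker z2 _)) !add0r.
Qed.

Definition lift (w : W) : V := proj1_sig (constructive_indefinite_description _ (fsurj w)).
Lemma liftK w : f (lift w) = w.
Proof. exact: (proj2_sig (constructive_indefinite_description _ (fsurj w))). Qed.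

Definition psi (w1 w2 : W) : V := brV (lift w1) (lift w2).

Lemma psiE u1 u2 w1 w2 : f u1 = w1 -> f u2 = w2 -> psi w1 w2 = brV u1 u2.
Proof. by move=> E1 E2; apply: br_ker; rewrite liftK. Qed.

Lemma f_psi w1 w2 : f (psi w1 w2) = brW w1 w2.
Proof. by rewrite fbr !liftK. Qed.

Lemma psil w : lin (psi ^~ w).
Proof.
move=> k a b /=.
rewrite (@psiE (k *: lift a + lift b) (lift w)) ?liftK //; last by rewrite flin !liftK.
by apply: brl.
Qed.

Lemma psir w : lin (psi w).
Proof.
move=> k a b /=.
rewrite (@psiE (lift w) (k *: lift a + lift b)) ?liftK //; last by rewrite flin !liftK.
by apply: brr.
Qed.

Lemma al_psi w1 w2 : alV (psi w1 w2) = psi (alW w1) (alW w2).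
Proof. by rewrite (hl_mult HV) (@psiE (alV (lift w1)) (alV (lift w2))) // fal liftK. Qed.

Definition rep (x : V) : seq (K * V * V) :=
  proj1_sig (constructive_indefinite_description _ (Vperf x)).

Lemma rep_spec x : Phi brV (tmap alV (rep x)) = x.
Proof.
rewrite Phi_tmap; symmetry.
exact: (proj2_sig (constructive_indefinite_description _ (Vperf x))).
Qed.

Definition Gg (g : W -> W) (s : seq (K * V * V)) : V :=
  Phi (fun a b => psi (g (f a)) (g (f b))) s.

Definition theta (g : W -> W) (x : V) : V := Gg g (tmap alV (rep x)).

Definition Pg (g : W -> W) := forall t, in_ker_U brV alV t -> Gg g t = 0.

Lemma theta_key g s : Pg g -> in_uce alV s -> theta g (Phi brV s) = Gg g s.
Proof.
move=> Hg Hs.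
set r := tmap alV (rep (Phi brV s)).
have Hr : Phi brV r = Phi brV s by rewrite rep_spec.
have Hd : in_ker_U brV alV (tsub s r).
  split; first by apply: in_uce_cat => //; apply: in_uce_tscale; apply: in_uce_tmap_al.
  by have := Phi_tsub brV s r; rewrite Hr subrr.
have := Hg _ Hd; rewrite /Gg Phi_tsub => /eqP; rewrite subr_eq0 => /eqP.
by [].
Qed.


Lemma al_surj x : exists y, x = alV y.
Proof.
exists (Phi brV (rep x)).
rewrite (lin_Phi _ _ allin) -{1}(rep_spec x) Phi_tmap.
by apply: Phi_ext => a b; rewrite (hl_mult HV).
Qed.

Section Theta.
Variable g : W -> W.
Hypotheses (glin : lin g) (gbr : forall x y, g (brW x y) = brW (g x) (g y))
  (gal : forall x, g (alW x) = alW (g x)) (Hg : Pg g).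

Lemma theta_lift x : f (theta g x) = g (f x).
Proof.
rewrite /theta /Gg (lin_Phi _ _ flin) -{2}(rep_spec x).
rewrite (lin_Phi _ _ flin) (lin_Phi _ _ glin).
by apply: Phi_ext => a b; rewrite f_psi fbr gbr.
Qed.

Lemma theta_lin : lin (theta g).
Proof.
move=> k x y.
have E : k *: x + y = Phi brV (tscale k (tmap alV (rep x)) ++ tmap alV (rep y)).
  by rewrite Phi_cat Phi_tscale !rep_spec.
rewrite E theta_key //; last first.
  by apply: in_uce_cat; [apply: in_uce_tscale|]; apply: in_uce_tmap_al.
by rewrite /Gg Phi_cat Phi_tscale.
Qed.

Lemma theta_br x y : theta g (brV x y) = brV (theta g x) (theta g y).
Proof.
have [x' ->] := al_surj x; have [y' ->] := al_surj y.
have E : brV (alV x') (alV y') = Phi brV [:: (1, alV x', alV y')].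
  by rewrite Phi_cons Phi_nil addr0 scale1r.
rewrite E theta_key //; last first.
  apply/in_uce_cons; split => //; split; [exists x' | exists y']; by [].
rewrite /Gg Phi_cons Phi_nil addr0 scale1r /=.
by apply: psiE; rewrite theta_lift.
Qed.

Lemma theta_al x : theta g (alV x) = alV (theta g x).
Proof.
have E : alV x = Phi brV (tmap alV (tmap alV (rep x))).
  rewrite -{1}(rep_spec x) (lin_Phi _ _ allin) !Phi_tmap.
  by apply: Phi_ext => a b; rewrite (hl_mult HV).
rewrite E theta_key //; last first.
  apply: in_uce_tmap; last by apply: in_uce_tmap_al.
  by move=> z; exists (alV z).
rewrite /theta /Gg (lin_Phi _ _ allin) Phi_tmap.
by apply: Phi_ext => a b; rewrite al_psi !fal !gal.
Qed.

Lemma theta_hom : is_hom brV alV brV alV (theta g).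
Proof. split; [exact: theta_lin | exact: theta_br | exact: theta_al]. Qed.

End Theta.

Lemma hom_unique t1 t2 :
  is_hom brV alV brV alV t1 -> is_hom brV alV brV alV t2 ->
  (forall x, f (t1 x) = f (t2 x)) -> t1 =1 t2.
Proof.
move=> [l1 b1 a1] [l2 b2 a2] E x.
rewrite -(rep_spec x) Phi_tmap (lin_Phi _ _ l1) (lin_Phi _ _ l2).
apply: Phi_ext => a b; rewrite b1 b2 a1 a2 a1 a2.
by apply: br_ker; rewrite !fal E.
Qed.


Lemma FgP g : is_hom brW alW brW alW g ->
  forall r, rel_gen brW alW r -> Phi (fun a b => psi (g a) (g b)) r = 0.
Proof.
move=> [gl gb ga]; apply: Phi_gen.
- by move=> w k a b /=; rewrite gl; apply: psil.
- by move=> w k a b /=; rewrite gl; apply: psir.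
move=> x1 x2 x3.
set u1 := lift (g x1); set u2 := lift (g x2); set u3 := lift (g x3).
have P1 : f u1 = g x1 by apply: liftK.
have P2 : f u2 = g x2 by apply: liftK.
have P3 : f u3 = g x3 by apply: liftK.
rewrite (@psiE (brV u1 u2) (alV u3)) ?fbr ?fal ?gb ?ga ?P1 ?P2 ?P3 //.
rewrite (@psiE (brV u1 u3) (alV u2)) ?fbr ?fal ?gb ?ga ?P1 ?P2 ?P3 //.
rewrite (@psiE (alV u1) (brV u2 u3)) ?fbr ?fal ?gb ?ga ?P1 ?P2 ?P3 //.
rewrite (hl_leibniz HV).
by rewrite addrC addrACA subrr addNr addr0.
Qed.

Lemma stable_P h : uce_stable brV alV brW alW f h -> Pg h.
Proof.
move=> [S1 _] t Ht; have [t' [Ht' E]] := S1 t Ht.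
have := Phi_uce (FgP (hom_id brW alW)) E.
rewrite !Phi_tmap /= /Gg => ->.
rewrite -(proj2 Ht'); apply: Phi_ext => a b; exact: psiE.
Qed.

Lemma stable_Pinv h hinv : is_hom brW alW brW alW hinv -> cancel h hinv ->
  uce_stable brV alV brW alW f h -> Pg hinv.
Proof.
move=> Hi c1 [_ S2] t Ht; have [s [Hs E]] := S2 t Ht.
have := Phi_uce (FgP Hi) E.
rewrite !Phi_tmap /= /Gg => ->.
rewrite -(proj2 Hs); apply: Phi_ext => a b; rewrite !c1; exact: psiE.
Qed.

Lemma lift_stable h th : is_aut brV alV th -> (forall x, f (th x) = h (f x)) ->
  uce_stable brV alV brW alW f h.
Proof.
move=> Ha Hl; have [thi [[il ib ia] c1 c2]] := aut_inv Ha.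
have [[tl tb ta] _] := Ha.
split.
- move=> s [Hs1 Hs2]; exists (tmap th s); split.
    split; first by apply: in_uce_tmap => // x; exists (th x); rewrite ta.
    rewrite -/(Phi brV _) Phi_tmap -(lin0 tl) -Hs2 (lin_Phi _ _ tl).
    by apply: Phi_ext => a b; rewrite tb.
  have -> : tmap f (tmap th s) = tmap h (tmap f s).
    by rewrite /tmap -!map_comp; apply: eq_map => e /=; rewrite !Hl.
  exact: uce_eq_refl.
- move=> t [Ht1 Ht2]; exists (tmap thi t); split.
    split; first by apply: in_uce_tmap => // x; exists (thi x); rewrite ia.
    rewrite -/(Phi brV _) Phi_tmap -(lin0 il) -Ht2 (lin_Phi _ _ il).
    by apply: Phi_ext => a b; rewrite ib.
  have -> : tmap h (tmap f (tmap thi t)) = tmap f t.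
    by rewrite /tmap -!map_comp; apply: eq_map => e /=; rewrite -!Hl !c2.
  exact: uce_eq_refl.
Qed.

Lemma stable_lift h : is_aut brW alW h -> uce_stable brV alV brW alW f h ->
  exists th, is_aut brV alV th /\ (forall x, f (th x) = h (f x)).
Proof.
move=> Ha St; have [hi [Hi c1 c2]] := aut_inv Ha.
have [Hh _] := Ha.
have P1 := stable_P St; have P2 := stable_Pinv Hi c1 St.
case: Hh => hl hb ha; case: (Hi) => il ib ia.
have T1 := theta_hom hl hb ha P1; have T2 := theta_hom il ib ia P2.
exists (theta h); split; last exact: theta_lift.
split => //; exists (theta hi).
- apply: (hom_unique (hom_comp T2 T1) (hom_id _ _)) => x /=.
  by rewrite !theta_lift // c1.
- apply: (hom_unique (hom_comp T1 T2) (hom_id _ _)) => x /=.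
  by rewrite !theta_lift // c2.
Qed.


Lemma lift_ker h th : is_aut brW alW h -> is_aut brV alV th ->
  (forall x, f (th x) = h (f x)) -> preserves_ker f th.
Proof.
move=> [[hl _ _] [hi c1 c2]] Ha Hl; have [thi [_ d1 d2]] := aut_inv Ha.
split; first by move=> x fx; rewrite Hl fx (lin0 hl).
move=> y fy; exists (thi y); split => //.
by rewrite -(c1 (f (thi y))) -Hl d2 fy -{1}(lin0 hl) c1.
Qed.

Definition Theta (h : W -> W) : V -> V :=
  epsilon (inhabits id) (fun th => is_aut brV alV th /\ forall x, f (th x) = h (f x)).

Lemma Theta_spec h : is_aut brW alW h -> uce_stable brV alV brW alW f h ->
  is_aut brV alV (Theta h) /\ forall x, f (Theta h x) = h (f x).
Proof. by move=> Ha St; exact: (epsilon_spec _ _ (stable_lift Ha St)). Qed.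

Lemma descend g : lin g -> (forall x, f x = 0 -> f (g x) = 0) ->
  forall u w, f u = w -> f (g u) = f (g (lift w)).
Proof.
move=> gl gk u w E; apply/eqP; rewrite -subr_eq0 -(linB flin) -(linB gl).
by rewrite gk // (linB flin) E liftK subrr.
Qed.

Lemma main_aux :
  (forall h, is_aut brW alW h ->
     (exists th, is_aut brV alV th /\ (forall x, f (th x) = h (f x))) <->
     uce_stable brV alV brW alW f h) /\
  (forall h, is_aut brW alW h -> uce_stable brV alV brW alW f h ->
     forall th1 th2, is_aut brV alV th1 -> is_aut brV alV th2 ->
     (forall x, f (th1 x) = h (f x)) -> (forall x, f (th2 x) = h (f x)) ->
     th1 =1 th2) /\
  (forall h th, is_aut brW alW h -> uce_stable brV alV brW alW f h ->
     is_aut brV alV th -> (forall x, f (th x) = h (f x)) ->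
     preserves_ker f th) /\
  (exists Theta : (W -> W) -> (V -> V),
     [/\ forall h, is_aut brW alW h -> uce_stable brV alV brW alW f h ->
           [/\ is_aut brV alV (Theta h), preserves_ker f (Theta h) &
               forall x, f (Theta h x) = h (f x)],
         forall h1 h2, is_aut brW alW h1 -> uce_stable brV alV brW alW f h1 ->
           is_aut brW alW h2 -> uce_stable brV alV brW alW f h2 ->
           uce_stable brV alV brW alW f (h1 \o h2) /\
           Theta (h1 \o h2) =1 Theta h1 \o Theta h2,
         forall h1 h2, is_aut brW alW h1 -> uce_stable brV alV brW alW f h1 ->
           is_aut brW alW h2 -> uce_stable brV alV brW alW f h2 ->
           Theta h1 =1 Theta h2 -> h1 =1 h2 &
         forall g, is_aut brV alV g -> preserves_ker f g ->
           exists h, [/\ is_aut brW alW h, uce_stable brV alV brW alW f h &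
                        Theta h =1 g]]).
Proof.
split.
  move=> h Ha; split; first by move=> [th [Ht Hl]]; apply: (lift_stable Ht Hl).
  exact: stable_lift.
split.
  move=> h Ha St th1 th2 [H1 _] [H2 _] L1 L2.
  by apply: hom_unique H1 H2 _ => x; rewrite L1 L2.
split.
  by move=> h th Ha _ Ht Hl; apply: (lift_ker Ha Ht Hl).
exists Theta; split.
- move=> h Ha St; have [T1 T2] := Theta_spec Ha St; split => //.
  exact: (lift_ker Ha T1 T2).
- move=> h1 h2 A1 S1 A2 S2.
  have [T1 L1] := Theta_spec A1 S1; have [T2 L2] := Theta_spec A2 S2.
  have T12 := aut_comp T1 T2.
  have L12 : forall x, f ((Theta h1 \o Theta h2) x) = (h1 \o h2) (f x).
    by move=> x /=; rewrite L1 L2.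
  have S12 := lift_stable T12 L12.
  split => //.
  have [T L] := Theta_spec (aut_comp A1 A2) S12.
  apply: (hom_unique (proj1 T) (proj1 T12)) => x; by rewrite L L12.
- move=> h1 h2 A1 S1 A2 S2 E w.
  have [_ L1] := Theta_spec A1 S1; have [_ L2] := Theta_spec A2 S2.
  by rewrite -(liftK w) -L1 -L2 E.
- move=> g Ag [gk gk2]; have [gi [[il ib ia] c1 c2]] := aut_inv Ag.
  have [[gl gb ga] _] := Ag.
  have gik : forall y, f y = 0 -> f (gi y) = 0.
    by move=> y fy; have [x [fx <-]] := gk2 y fy; rewrite c1.
  pose hw := fun w => f (g (lift w)).
  pose hv := fun w => f (gi (lift w)).
  have D := descend gl gk; have Di := descend il gik.
  have Hhw : is_hom brW alW brW alW hw.
    split.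
    + move=> k a b; rewrite /hw -(D (k *: lift a + lift b)); last by rewrite flin !liftK.
      by rewrite gl flin.
    + move=> a b; rewrite /hw -(D (brV (lift a) (lift b))); last by rewrite fbr !liftK.
      by rewrite gb fbr.
    + move=> a; rewrite /hw -(D (alV (lift a))); last by rewrite fal liftK.
      by rewrite ga fal.
  have Ahw : is_aut brW alW hw.
    split => //; exists hv => w; rewrite /hw /hv.
    + by rewrite -(Di (g (lift w))) // c1 liftK.
    + by rewrite -(D (gi (lift w))) // c2 liftK.
  have Lg : forall x, f (g x) = hw (f x) by move=> x; apply: D.
  have Sg := lift_stable Ag Lg.
  exists hw; split => //.
  have [T L] := Theta_spec Ahw Sg.
  by apply: (hom_unique (proj1 T) (proj1 Ag)) => x; rewrite L Lg.
Qed.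

End Main.

Theorem theorem4p3 (K : fieldType) (V W : lmodType K)
    (brV : V -> V -> V) (alV : V -> V) (brW : W -> W -> W) (alW : W -> W)
    (f : V -> W) :
  HomLeibniz brV alV -> HomLeibniz brW alW ->
  alpha_cover brV alV brW alW f ->
  (* existence of a lift iff uce_alpha(h)(C) = C *)
  (forall h, is_aut brW alW h ->
     (exists th, is_aut brV alV th /\ (forall x, f (th x) = h (f x))) <->
     uce_stable brV alV brW alW f h) /\
  (* uniqueness and Ker f-invariance of the lift *)
  (forall h, is_aut brW alW h -> uce_stable brV alV brW alW f h ->
     forall th1 th2, is_aut brV alV th1 -> is_aut brV alV th2 ->
     (forall x, f (th1 x) = h (f x)) -> (forall x, f (th2 x) = h (f x)) ->
     th1 =1 th2) /\
  (forall h th, is_aut brW alW h -> uce_stable brV alV brW alW f h ->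
     is_aut brV alV th -> (forall x, f (th x) = h (f x)) ->
     preserves_ker f th) /\
  (* Theta : h |-> theta_h is a group isomorphism *)
  (exists Theta : (W -> W) -> (V -> V),
     [/\ forall h, is_aut brW alW h -> uce_stable brV alV brW alW f h ->
           [/\ is_aut brV alV (Theta h), preserves_ker f (Theta h) &
               forall x, f (Theta h x) = h (f x)],
         forall h1 h2, is_aut brW alW h1 -> uce_stable brV alV brW alW f h1 ->
           is_aut brW alW h2 -> uce_stable brV alV brW alW f h2 ->
           uce_stable brV alV brW alW f (h1 \o h2) /\
           Theta (h1 \o h2) =1 Theta h1 \o Theta h2,
         forall h1 h2, is_aut brW alW h1 -> uce_stable brV alV brW alW f h1 ->
           is_aut brW alW h2 -> uce_stable brV alV brW alW f h2 ->
           Theta h1 =1 Theta h2 -> h1 =1 h2 &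
         forall g, is_aut brV alV g -> preserves_ker f g ->
           exists h, [/\ is_aut brW alW h, uce_stable brV alV brW alW f h &
                        Theta h =1 g]]).
Proof. by move=> HV HW Hc; apply: main_aux. Qed.
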